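(* Let $\Omega$ be a metrizable separable space, $\mathcal{L}\subset\mathcal{C}_b(\Omega)$ a linear subspace which is a vector lattice, contains the constants and generates the topology, and let $\rho$ be a normalized uniformly regular convex risk measure on $\mathcal{L}$. Let $\rho_1$ be a regular sublinear risk measure on $\mathcal{L}$ with $\rho\le\rho_1$. Then: (i) $c(X)=\rho_1(-|X|)$ defines a capacity on $\mathcal{L}$; (ii) $\rho_1$ has a unique continuous extension to a sublinear risk measure $\overline{\rho_1}$ on $L^1(c)$; (iii) $\rho$ has a unique continuous extension to a normalized convex risk measure $\overline{\rho}$ on $L^1(c)$, majorized by $\overline{\rho_1}$.
   Context: A convex risk measure on $\mathcal{L}$ (resp. on $L^1(c)$) is a map $\rho$ to $\mathbb{R}$ that is monotone ($X\le Y\Rightarrow\rho(X)\ge\rho(Y)$), convex and translation invariant ($\rho(X+a)=\rho(X)-a$, $a\in\mathbb{R}$); normalized means $\rho(0)=0$; sublinear means additionally positively homogeneous. A sublinear risk measure $\rho_1$ on $\mathcal{L}$ is regular if $\rho_1(-X_n)\to0$ for every sequence $X_n\in\mathcal{L}$ decreasing pointwise to $0$. A normalized convex risk measure $\rho$ on $\mathcal{L}$ is uniformly regular if $\sup_{\lambda>0}\rho(\lambda X)/\lambda<\infty$ for all $X$, and for every sequence $X_n\in\mathcal{L}$ decreasing to $0$, $\rho(-\lambda X_n)/\lambda\to0$ uniformly in $\lambda>0$. A capacity on $\mathcal{L}$ is a seminorm $c$ with $c(f)\le c(g)$ whenever $|f|\le|g|$ and $\inf_n c(f_n)=0$ for $f_n\in\mathcal{L}$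 decreasing to $0$; extended to all functions by $c(f)=\sup\{c(\varphi):\varphi\in\mathcal{L},0\le\varphi\le f\}$ for $f\ge0$ l.s.c. and $c(g)=\inf\{c(f):f\text{ l.s.c.},f\ge|g|\}$. $L^1(c)$ is the Banach space obtained as the quotient by $c$-null elements of the $c$-closure of $\mathcal{L}$ in $\{g:c(g)<\infty\}$, ordered by: $X\ge0$ iff some $f_n\in\mathcal{L}$, $f_n\ge0$, satisfy $c(g-f_n)\to0$ for every representative $g$ of $X$. *)

(* Defs.v *)
From HB Require Import structures.
From mathcomp Require Import all_boot all_order all_algebra.
From mathcomp Require Import all_classical all_reals all_analysis.
Import Order.TTheory GRing.Theory Num.Theory.
Import numFieldNormedType.Exports.
Set Implicit Arguments. Unset Strict Implicit. Unset Printing Implicit Defensive.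
Local Open Scope classical_set_scope.
Local Open Scope ring_scope.

Definition metrizable (R : realType) (T : topologicalType) : Prop :=
  exists d : T -> T -> R,
    (forall x y, 0 <= d x y) /\ (forall x y, d x y = 0 <-> x = y) /\
    (forall x y, d x y = d y x) /\ (forall x y z, d x z <= d x y + d y z) /\
    (forall (x : T) (A : set T),
        nbhs x A <-> exists2 e : R, 0 < e & [set y | d x y < e] `<=` A).

Definition separable (T : topologicalType) : Prop :=
  exists D : set T, countable D /\ closure D = setT.

Definition bounded_continuous (R : realType) (T : topologicalType)
  (f : T -> R) : Prop :=
  continuous f /\ exists M : R, forall x, `|f x| <= M.

Definition vector_lattice (R : realType) (T : Type) (L : set (T -> R)) : Prop :=
  L (fun _ => 0) /\
  (forall f g, L f -> L g -> L (fun x => f x + g x)) /\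
  (forall (a : R) f, L f -> L (fun x => a * f x)) /\
  (forall f g, L f -> L g -> L (fun x => Num.max (f x) (g x))) /\
  (forall f g, L f -> L g -> L (fun x => Num.min (f x) (g x))).

Definition contains_constants (R : realType) (T : Type) (L : set (T -> R)) :=
  forall a : R, L (fun _ => a).

(* L generates the topology of T: the initial topology of L is finer than
   (hence equal to, as L consists of continuous functions) the topology of T;
   i.e. every open set is a neighbourhood of each of its points in the
   initial topology of L (basic neighbourhoods are finite intersections of
   sets {y | |f_i y - f_i x| < e}, f_i in L). *)
Definition generates_topology (R : realType) (T : topologicalType)
  (L : set (T -> R)) : Prop :=
  forall (A : set T) (x : T), open A -> A x ->
    exists (n : nat) (f : 'I_n -> T -> R) (e : R),
      (forall i, L (f i)) /\ 0 < e /\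
      [set y | forall i, `|f i y - f i x| < e] `<=` A.

Definition decr_to0 (R : realType) (T : Type) (X : nat -> T -> R) : Prop :=
  (forall n x, X n.+1 x <= X n x) /\
  (forall x, (fun n => X n x) @ \oo --> (0 : R)).

Definition convex_risk_measure (R : realType) (T : Type) (L : set (T -> R))
  (rho : (T -> R) -> R) : Prop :=
  (forall X Y, L X -> L Y -> (forall x, X x <= Y x) -> rho Y <= rho X) /\
  (forall X Y (l : R), L X -> L Y -> 0 <= l <= 1 ->
     rho (fun x => l * X x + (1 - l) * Y x) <= l * rho X + (1 - l) * rho Y) /\
  (forall X (a : R), L X -> rho (fun x => X x + a) = rho X - a).

Definition normalized (R : realType) (T : Type) (rho : (T -> R) -> R) : Prop :=
  rho (fun _ => 0) = 0.

Definition sublinear_risk_measure (R : realType) (T : Type) (L : set (T -> R))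
  (rho : (T -> R) -> R) : Prop :=
  convex_risk_measure L rho /\
  (forall X (l : R), L X -> 0 <= l -> rho (fun x => l * X x) = l * rho X).

Definition regular (R : realType) (T : Type) (L : set (T -> R))
  (rho1 : (T -> R) -> R) : Prop :=
  forall X : nat -> T -> R, (forall n, L (X n)) -> decr_to0 X ->
    (fun n => rho1 (fun x => - X n x)) @ \oo --> (0 : R).

Definition uniformly_regular (R : realType) (T : Type) (L : set (T -> R))
  (rho : (T -> R) -> R) : Prop :=
  (forall X, L X -> exists M : R,
       forall l : R, 0 < l -> rho (fun x => l * X x) / l <= M) /\
  (forall X : nat -> T -> R, (forall n, L (X n)) -> decr_to0 X ->
     forall e : R, 0 < e -> exists N : nat, forall n, (N <= n)%N ->
       forall l : R, 0 < l -> `|rho (fun x => - (l * X n x)) / l| < e).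

(* c is a capacity on L: a monotone seminorm on L with inf_n c(f_n) = 0
   for f_n in L decreasing to 0 (since c >= 0, inf = 0 is the e-form). *)
Definition capacity (R : realType) (T : Type) (L : set (T -> R))
  (c : (T -> R) -> R) : Prop :=
  (forall f g, L f -> L g -> c (fun x => f x + g x) <= c f + c g) /\
  (forall (a : R) f, L f -> c (fun x => a * f x) = `|a| * c f) /\
  (forall f g, L f -> L g -> (forall x, `|f x| <= `|g x|) -> c f <= c g) /\
  (forall f : nat -> T -> R, (forall n, L (f n)) -> decr_to0 f ->
     forall e : R, 0 < e -> exists n, c (f n) < e).

Definition lsc (R : realType) (T : topologicalType) (f : T -> \bar R) : Prop :=
  forall (x : T) (a : R), (a%:E < f x)%E -> \forall y \near x, (a%:E < f y)%E.

Definition cap_lsc (R : realType) (T : topologicalType) (L : set (T -> R))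
  (c : (T -> R) -> R) (f : T -> \bar R) : \bar R :=
  ereal_sup [set (c phi)%:E | phi in
     [set phi | L phi /\ forall x, 0 <= phi x /\ ((phi x)%:E <= f x)%E]].

Definition cap_ext (R : realType) (T : topologicalType) (L : set (T -> R))
  (c : (T -> R) -> R) (g : T -> R) : \bar R :=
  ereal_inf [set cap_lsc L c f | f in
     [set f | lsc f /\ forall x, (0 <= f x)%E /\ (`|g x|%:E <= f x)%E]].

(* representatives of elements of L^1(c): the c-closure of L inside
   {g | c(g) < oo} *)
Definition L1 (R : realType) (T : topologicalType) (L : set (T -> R))
  (c : (T -> R) -> R) (g : T -> R) : Prop :=
  (cap_ext L c g < +oo)%E /\
  forall e : R, 0 < e ->
    exists2 f, L f & (cap_ext L c (fun x => g x - f x)%R < e%:E)%E.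

Definition L1_equiv (R : realType) (T : topologicalType) (L : set (T -> R))
  (c : (T -> R) -> R) (g h : T -> R) : Prop :=
  cap_ext L c (fun x => g x - h x)%R = 0%E.

Definition L1_nonneg (R : realType) (T : topologicalType) (L : set (T -> R))
  (c : (T -> R) -> R) (g : T -> R) : Prop :=
  exists f : nat -> T -> R,
    (forall n, L (f n) /\ forall x, 0 <= f n x) /\
    forall h, L1 L c h -> L1_equiv L c h g ->
      forall e : R, 0 < e -> exists N : nat, forall n, (N <= n)%N ->
        (cap_ext L c (fun x => h x - f n x)%R < e%:E)%E.

Definition L1_le (R : realType) (T : topologicalType) (L : set (T -> R))
  (c : (T -> R) -> R) (X Y : T -> R) : Prop :=
  L1_nonneg L c (fun x => Y x - X x).

(* A map on L^1(c), given on representatives, must be class-invariant. *)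
Definition L1_map (R : realType) (T : topologicalType) (L : set (T -> R))
  (c : (T -> R) -> R) (Phi : (T -> R) -> R) : Prop :=
  forall g h, L1 L c g -> L1 L c h -> L1_equiv L c g h -> Phi g = Phi h.

Definition L1_continuous (R : realType) (T : topologicalType) (L : set (T -> R))
  (c : (T -> R) -> R) (Phi : (T -> R) -> R) : Prop :=
  forall g, L1 L c g -> forall e : R, 0 < e ->
    exists2 d : R, 0 < d & forall h, L1 L c h ->
      (cap_ext L c (fun x => h x - g x)%R < d%:E)%E -> `|Phi h - Phi g| < e.

Definition L1_convex_risk_measure (R : realType) (T : topologicalType)
  (L : set (T -> R)) (c : (T -> R) -> R) (Phi : (T -> R) -> R) : Prop :=
  L1_map L c Phi /\
  (forall X Y, L1 L c X -> L1 L c Y -> L1_le L c X Y -> Phi Y <= Phi X) /\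
  (forall X Y (l : R), L1 L c X -> L1 L c Y -> 0 <= l <= 1 ->
     Phi (fun x => l * X x + (1 - l) * Y x) <= l * Phi X + (1 - l) * Phi Y) /\
  (forall X (a : R), L1 L c X -> Phi (fun x => X x + a) = Phi X - a).

Definition L1_sublinear_risk_measure (R : realType) (T : topologicalType)
  (L : set (T -> R)) (c : (T -> R) -> R) (Phi : (T -> R) -> R) : Prop :=
  L1_convex_risk_measure L c Phi /\
  (forall X (l : R), L1 L c X -> 0 <= l -> Phi (fun x => l * X x) = l * Phi X).

(* Main.v *)
Require Import Defs.
From HB Require Import structures.
From mathcomp Require Import all_boot all_order all_algebra.
From mathcomp Require Import all_classical all_reals all_analysis.
From mathcomp Require Import ring lra.
Import Order.TTheory GRing.Theory Num.Theory.
Import numFieldNormedType.Exports.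
Local Open Scope classical_set_scope.
Local Open Scope ring_scope.
Set Implicit Arguments. Unset Strict Implicit. Unset Printing Implicit Defensive.
Section Main.
Variables (R : realType) (T : topologicalType) (L : set (T -> R)).
Variable rho1 : (T -> R) -> R.
Hypothesis VL : vector_lattice L.
Hypothesis CL : contains_constants L.
Hypothesis SL : sublinear_risk_measure L rho1.

Lemma Lext f g : L f -> (forall x, f x = g x) -> L g.
Proof. by move=> Lf e; have -> : g = f by apply/funext=> x; rewrite e. Qed.

Lemma L0 : L (fun _ => 0). Proof. by case: VL. Qed.
Lemma LD f g : L f -> L g -> L (fun x => f x + g x).
Proof. by case: VL => _ [+ _]; apply. Qed.
Lemma LZ a f : L f -> L (fun x => a * f x).
Proof. by case: VL => _ [_ [+ _]]; apply. Qed.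
Lemma Lmax f g : L f -> L g -> L (fun x => Num.max (f x) (g x)).
Proof. by case: VL => _ [_ [_ [+ _]]]; apply. Qed.
Lemma Lmin f g : L f -> L g -> L (fun x => Num.min (f x) (g x)).
Proof. by case: VL => _ [_ [_ [_ +]]]; apply. Qed.
Lemma LN f : L f -> L (fun x => - f x).
Proof. move=> Lf; apply: (Lext (LZ (-1) Lf)) => x; by rewrite mulN1r. Qed.
Lemma LB f g : L f -> L g -> L (fun x => f x - g x).
Proof. by move=> Lf Lg; apply: LD => //; apply: LN. Qed.
Lemma Lc a : L (fun _ => a). Proof. exact: CL. Qed.
Lemma Labs f : L f -> L (fun x => `|f x|).
Proof.
move=> Lf; apply: (Lext (Lmax Lf (LN Lf))) => x.
case: (lerP 0 (f x)) => h.
  by rewrite ger0_norm // max_l //; lra.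
by rewrite ltr0_norm // max_r //; lra.
Qed.

Lemma rho1_mono X Y : L X -> L Y -> (forall x, X x <= Y x) -> rho1 Y <= rho1 X.
Proof. by case: SL => [[+ _] _]; apply. Qed.
Lemma rho1_hom X l : L X -> 0 <= l -> rho1 (fun x => l * X x) = l * rho1 X.
Proof. by case: SL => _; apply. Qed.
Lemma rho1_cvx X Y l : L X -> L Y -> 0 <= l <= 1 ->
  rho1 (fun x => l * X x + (1 - l) * Y x) <= l * rho1 X + (1 - l) * rho1 Y.
Proof. by case: SL => [[_ [+ _]] _]; apply. Qed.
Lemma rho1_0 : rho1 (fun _ => 0) = 0.
Proof.
by have := rho1_hom L0 (le_refl 0); rewrite /= !mul0r.
Qed.
Lemma rho1_sub X Y : L X -> L Y -> rho1 (fun x => X x + Y x) <= rho1 X + rho1 Y.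
Proof.
move=> LX LY.
have e2 : forall a : R, 2^-1 * (2 * a) = a.
  by move=> a; rewrite mulrA mulVf ?mul1r // pnatr_eq0.
have e : 1 - 2^-1 = 2^-1 :> R by rewrite {1}(splitr 1) mul1r addrK.
have l01 : 0 <= (2^-1 : R) <= 1.
  by rewrite invr_ge0 ler0n /= invf_le1 ?ltr0Sn // ler1n.
have h := @rho1_cvx (fun x => 2 * X x) (fun x => 2 * Y x) (2^-1) (LZ 2 LX) (LZ 2 LY) l01.
rewrite e !rho1_hom ?ler0n // !e2 in h.
have -> : (fun x => X x + Y x) = (fun x => 2^-1 * (2 * X x) + 2^-1 * (2 * Y x)).
  by apply/funext=> x; rewrite !e2.
exact: h.
Qed.
End Main.
Section Main2.
Variables (R : realType) (T : topologicalType) (L : set (T -> R)).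
Variable rho1 : (T -> R) -> R.
Hypothesis VL : vector_lattice L.
Hypothesis CL : contains_constants L.
Hypothesis SL : sublinear_risk_measure L rho1.
Let c := fun X : T -> R => rho1 (fun x => - `|X x|).

Lemma c_ge0 f : L f -> 0 <= c f.
Proof.
move=> Lf; rewrite -(rho1_0 VL SL).
apply: (rho1_mono SL (LN VL (Labs VL Lf)) (L0 VL)) => x.
by rewrite oppr_le0.
Qed.

Lemma c_sub f g : L f -> L g -> c (fun x => f x + g x) <= c f + c g.
Proof.
move=> Lf Lg; apply: le_trans (rho1_sub VL SL (LN VL (Labs VL Lf)) (LN VL (Labs VL Lg))).
apply: (rho1_mono SL).
- by apply: LD => //; apply: LN => //; apply: Labs.
- by apply: LN => //; apply: Labs => //; apply: LD.
move=> x; rewrite -opprD lerN2; exact: ler_normD.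
Qed.

Lemma c_hom a f : L f -> c (fun x => a * f x) = `|a| * c f.
Proof.
move=> Lf; rewrite /c -(rho1_hom SL _ (normr_ge0 a)); last by apply: LN => //; apply: Labs.
by congr rho1; apply/funext => x; rewrite normrM mulrN.
Qed.

Lemma c_mono f g : L f -> L g -> (forall x, `|f x| <= `|g x|) -> c f <= c g.
Proof.
move=> Lf Lg h; apply: (rho1_mono SL); try by apply: LN => //; apply: Labs.
by move=> x; rewrite lerN2.
Qed.

Lemma rho1_le_c X : L X -> rho1 X <= c X.
Proof.
move=> LX; apply: (rho1_mono SL) => //; first by apply: LN => //; apply: Labs.
by move=> x; have := ler_norm (- X x); rewrite normrN; lra.
Qed.

Lemma cvx_lip (r : (T -> R) -> R) : convex_risk_measure L r ->
  (forall X, L X -> r X <= rho1 X) ->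
  forall X Y, L X -> L Y -> r X <= r Y + c (fun x => X x - Y x).
Proof.
move=> [_ [rc _]] rle X Y LX LY.
have LXY : L (fun x => X x - Y x) by apply: LB.
have K0 : 0 <= rho1 Y - r Y by rewrite subr_ge0; apply: rle.
set K := rho1 Y - r Y in K0.
apply/ler_addgt0Pr => eps eps0.
set t := Num.min 1 (eps / (K + 1)).
have t0 : 0 < t by rewrite lt_min ltr01 /= divr_gt0 // ltr_wpDl.
have t1 : t <= 1 by rewrite ge_min lexx.
have tK : t * K <= eps.
  apply: le_trans (_ : eps / (K + 1) * K <= eps).
    by apply: ler_wpM2r => //; rewrite ge_min lexx orbT.
  by rewrite mulrAC ler_pdivrMr ?ltr_wpDl // ler_pM2l // lerDl.
set U := fun x => Y x + t^-1 * (X x - Y x).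
have LU : L U by apply: LD => //; apply: LZ.
have eX : X = (fun x => t * U x + (1 - t) * Y x).
  apply/funext => x; rewrite /U mulrDr mulrA mulfV ?gt_eqF // mul1r; lra.
have h1 := rc U Y t LU LY (introT andP (conj (ltW t0) t1)).
rewrite -eX in h1.
have h2 : r U <= rho1 Y + t^-1 * c (fun x => X x - Y x).
  apply: le_trans (rle _ LU) _.
  apply: le_trans (rho1_sub VL SL LY (LZ VL _ LXY)) _.
  have ti : 0 <= t^-1 by rewrite invr_ge0 ltW.
  rewrite (rho1_hom SL LXY ti) lerD2l ler_wpM2l //.
  exact: rho1_le_c.
have h3 : t * r U <= t * rho1 Y + c (fun x => X x - Y x).
  have := ler_wpM2l (ltW t0) h2; rewrite mulrDr mulrA mulfV ?gt_eqF // mul1r.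
  by [].
apply: le_trans h1 _.
rewrite /K in tK; nra.
Qed.
End Main2.
Lemma near_oo_ex (P : nat -> Prop) : (\forall n \near \oo, P n) ->
  exists N, forall n, (N <= n)%N -> P n.
Proof. by move=> [N _ HN]; exists N => n /HN. Qed.

Lemma decr_ge0 (R : realType) (T : Type) (X : nat -> T -> R) :
  decr_to0 X -> forall n x, 0 <= X n x.
Proof.
move=> [dec cv] n x; rewrite leNgt; apply/negP => Xn.
have [N HN] := near_oo_ex (cvgr_gt _ (cv x) _ Xn).
have := HN (maxn N n) (leq_maxl _ _).
have hm : X (maxn N n) x <= X n x.
  have := @homo_leq R (fun m => X m x) (fun a b => b <= a) (@lexx _ _)
    (fun y a b h1 h2 => le_trans h2 h1) (fun i => dec i x) n (maxn N n) (leq_maxr _ _).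
  by [].
by rewrite ltNge hm.
Qed.

Section Cap.
Variables (R : realType) (T : topologicalType) (L : set (T -> R)).
Variable rho1 : (T -> R) -> R.
Hypothesis VL : vector_lattice L.
Hypothesis CL : contains_constants L.
Hypothesis SL : sublinear_risk_measure L rho1.
Hypothesis RG : regular L rho1.
Let c := fun X : T -> R => rho1 (fun x => - `|X x|).

Lemma cap_i : capacity L c.
Proof.
split; first exact: c_sub.
split; first exact: c_hom.
split; first exact: c_mono.
move=> X LX dX e e0.
have [N HN] := near_oo_ex (cvgr_lt _ (RG LX dX) _ e0).
exists N; have := HN N (leqnn N); congr (_ < _); congr rho1; apply/funext => x.
by rewrite ger0_norm //; apply: decr_ge0.
Qed.
End Cap.
Section Cext.
Variables (R : realType) (T : topologicalType) (L : set (T -> R)).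
Variable rho1 : (T -> R) -> R.
Hypothesis VL : vector_lattice L.
Hypothesis HCL : contains_constants L.
Hypothesis SL : sublinear_risk_measure L rho1.
Hypothesis HBC : forall f, L f -> bounded_continuous f.
Let c := fun X : T -> R => rho1 (fun x => - `|X x|).
Let C := cap_ext L c.

Lemma Lcont f : L f -> continuous f.
Proof. by move/HBC => []. Qed.

Lemma lsc_fin (f : T -> R) : continuous f -> lsc (fun x => (f x)%:E).
Proof.
move=> cf x a; rewrite lte_fin => ax.
have h := @cvgr_gt _ _ _ (nbhs_filter x) f (f x) (cf x) a ax.
near=> y. have : a < f y by near: y; exact: h.
by rewrite lte_fin.
Unshelve. all: by end_near.
Qed.

Lemma c0 : c (fun _ => 0) = 0.
Proof.
rewrite /c -[RHS](rho1_0 VL SL); congr rho1; apply/funext => x /=; by rewrite normr0 oppr0.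
Qed.

Lemma cap_lsc_ub F phi : L phi -> (forall x, 0 <= phi x /\ ((phi x)%:E <= F x)%E) ->
  ((c phi)%:E <= cap_lsc L c F)%E.
Proof. by move=> Lp hp; apply: ereal_sup_ubound; exists phi. Qed.

Lemma cap_lsc_ge0 F : (forall x, (0 <= F x)%E) -> (0 <= cap_lsc L c F)%E.
Proof.
move=> F0; apply: le_trans (_ : ((c (fun _ => 0))%:E <= _)%E); first by rewrite c0.
apply: cap_lsc_ub; first exact: L0.
by move=> x; split.
Qed.

Lemma C_ge0 g : (0 <= C g)%E.
Proof.
apply: le_ereal_inf_tmp => _ [F [_ hF] <-]; apply: cap_lsc_ge0 => x; by case: (hF x).
Qed.

Lemma C_le_lsc g F : lsc F -> (forall x, (0 <= F x)%E /\ ((`|g x|)%:E <= F x)%E) ->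
  (C g <= cap_lsc L c F)%E.
Proof. by move=> lF hF; apply: ge_ereal_inf; exists (cap_lsc L c F) => //; exists F. Qed.

Lemma C_lt g M : (C g < M)%E -> exists F, [/\ lsc F,
  (forall x, (0 <= F x)%E /\ ((`|g x|)%:E <= F x)%E) & (cap_lsc L c F < M)%E].
Proof. by move/ereal_inf_lt => [_ [F [lF hF] <-] h]; exists F. Qed.

Lemma C_abs_le g h : (forall x, `|g x| <= `|h x|) -> (C g <= C h)%E.
Proof.
move=> gh; apply: ereal_inf_le_tmp => _ [F [lF hF] <-]; exists F => //; split => // x.
have [F0 hx] := hF x; split => //; apply: le_trans hx; by rewrite lee_fin.
Qed.

Lemma C_abs_eq g h : (forall x, `|g x| = `|h x|) -> C g = C h.
Proof. by move=> gh; apply/le_anti; rewrite !C_abs_le // => x; rewrite gh. Qed.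

Lemma C_L f : L f -> C f = (c f)%:E.
Proof.
move=> Lf; have Lab := Labs VL Lf.
apply/le_anti/andP; split.
  apply: le_trans (C_le_lsc (F := fun x => (`|f x|)%:E) _ _) _.
  - by apply: lsc_fin; apply: Lcont.
  - by move=> x; rewrite lee_fin; split.
  apply: ge_ereal_sup => _ [phi [Lp hp] <-]; rewrite lee_fin.
  apply: (c_mono VL SL) => // x; have [p0 px] := hp x.
  by rewrite lee_fin in px; rewrite ger0_norm.
apply: le_ereal_inf_tmp => _ [F [lF hF] <-].
have -> : c f = c (fun x => `|f x|) by rewrite /c; congr rho1; apply/funext => x; rewrite normr_id.
apply: cap_lsc_ub => // x; split => //; by case: (hF x).
Qed.

Lemma C0 : C (fun _ => 0) = 0%E.
Proof. by rewrite C_L ?c0 //; apply: L0. Qed.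
End Cext.
Section Bump.
Variables (R : realType) (T : topologicalType) (L : set (T -> R)).
Hypothesis VL : vector_lattice L.
Hypothesis HCL : contains_constants L.
Hypothesis GT : generates_topology L.

Lemma fmax n (g : 'I_n -> T -> R) : (forall i, L (g i)) -> (forall i z, 0 <= g i z) ->
  exists m, [/\ L m, (forall z, 0 <= m z), (forall i z, g i z <= m z) &
    (forall z, (forall i, g i z = 0) -> m z = 0)].
Proof.
elim: n g => [|n IH] g Lg g0.
  exists (fun _ => 0); split; [exact: (L0 VL) | by [] | by case | by []].
have [m' [Lm' m'0 m'g m'z]] := IH (fun i => g (lift ord0 i)) (fun i => Lg _) (fun i => g0 _).
exists (fun z => Num.max (m' z) (g ord0 z)); split.
- exact: (Lmax VL).
- by move=> z; rewrite le_max m'0.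
- move=> i z; case: (unliftP ord0 i) => [j ->|->]; rewrite le_max ?lexx ?orbT //.
  by rewrite m'g.
- move=> z hz; rewrite m'z ?hz //; first by rewrite maxxx.
Qed.

Lemma bump (F : T -> \bar R) x (a : R) : lsc F -> (forall z, (0 <= F z)%E) -> 0 <= a ->
  (a%:E < F x)%E ->
  exists b, [/\ L b, (forall z, 0 <= b z /\ ((b z)%:E <= F z)%E) & b x = a].
Proof.
move=> lF F0 a0 aF.
have oO : open [set z | (a%:E < F z)%E].
  rewrite openE => z Oz; exact: lF.
have [n [f [e [Lf [e0 sub]]]]] := GT oO aF.
have [m [Lm m0 mg mx]] := @fmax n (fun i y => `|f i y - f i x|)
  (fun i => Labs VL (LB VL (Lf i) (Lc HCL _))) (fun i z => normr_ge0 _).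
exists (fun y => a * Num.max 0 (1 - e^-1 * m y)); split.
- apply: (LZ VL); apply: (Lmax VL); first exact: (Lc HCL).
  by apply: (LB VL); [exact: (Lc HCL)| apply: (LZ VL)].
- move=> z; split; first by rewrite mulr_ge0 // le_max lexx.
  case: (ltP (m z) e) => hm.
    have Oz : (a%:E < F z)%E.
      apply: sub => i /=; exact: le_lt_trans (mg i z) hm.
    apply: le_trans (ltW Oz); rewrite lee_fin ler_piMr // ge_max ler01 /=.
    by rewrite lerBlDr lerDl mulr_ge0 // invr_ge0 ltW.
  have -> : Num.max 0 (1 - e^-1 * m z) = 0.
    apply/max_idPl; rewrite subr_le0 ler_pdivlMl //.
    by rewrite mulr1.
  by rewrite mulr0; apply: F0.
- rewrite mx ?mulr0 ?subr0 ?max_r ?ler01 ?mulr1 // => i.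
  by rewrite subrr normr0.
Qed.
End Bump.
Section Approx.
Variables (R : realType) (T : topologicalType) (L : set (T -> R)).
Hypothesis VL : vector_lattice L.
Hypothesis HCL : contains_constants L.
Hypothesis GT : generates_topology L.
Hypothesis HBC : forall f, L f -> bounded_continuous f.
Hypothesis MET : metrizable R T.
Hypothesis SEP : separable T.

Lemma approx (F : T -> \bar R) : lsc F -> (forall z, (0 <= F z)%E) ->
  exists A : nat -> T -> R, [/\ (forall n, L (A n)),
    (forall n z, 0 <= A n z /\ ((A n z)%:E <= F z)%E),
    (forall n z, A n z <= A n.+1 z) &
    (forall z (b : R), (b%:E < F z)%E -> exists n, b < A n z)].
Proof.
move=> lF F0.
have [d [d0 [dE [dS [dT dN]]]]] := MET.
have [D [cD clD]] := SEP.
have [fD injD] := countable_injP _ cD.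
have hb : forall p : T * R, exists b, (0 <= p.2 -> (p.2%:E < F p.1)%E -> b p.1 = p.2) /\
    L b /\ (forall z, 0 <= b z /\ ((b z)%:E <= F z)%E).
  move=> [x a] /=.
  case: (pselect (0 <= a /\ (a%:E < F x)%E)) => [[a0 aF]|na].
    have [b [Lb hb bx]] := bump VL HCL GT lF F0 a0 aF.
    by exists b.
  exists (fun _ => 0); split; first by move=> a0 aF; exfalso; apply: na.
  split; first exact: (L0 VL).
  by move=> z; split.
have [bf hbf] := choice hb.
pose lv (t : nat * nat * nat * nat) : R := (t.1.1.2)%:R / (t.1.1.1).+1%:R.
pose dl (t : nat * nat * nat * nat) : R := (t.1.1.1).+1%:R^-1.
pose Bt (t : nat * nat * nat * nat) :=
  [set y | exists q, D q /\ fD q = t.1.2 /\ d q y < (t.2).+1%:R^-1].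
pose V t x := [set y | lv t - dl t < bf (x, lv t) y].
have hh : forall t : nat * nat * nat * nat, exists h, L h /\
    (forall z, 0 <= h z /\ ((h z)%:E <= F z)%E) /\
    ((exists x, ((lv t)%:E < F x)%E /\ Bt t `<=` V t x) -> forall z, Bt t z -> lv t - dl t < h z).
  move=> t.
  case: (pselect (exists x, ((lv t)%:E < F x)%E /\ Bt t `<=` V t x)) => [[x [ax sub]]|nx].
    exists (bf (x, lv t)); have [_ [Lb hb']] := hbf (x, lv t).
    by split => //; split => // _ z /sub.
  exists (fun _ => 0); split; first exact: (L0 VL).
  by split => // ex; exfalso; apply: nx.
have [hf hhf] := choice hh.
pose gs (n : nat) : T -> R :=
  match (unpickle n : option (nat * nat * nat * nat)) with
  | Some t => hf t | None => fun _ => 0 end.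
have gsP : forall n, L (gs n) /\ (forall z, 0 <= gs n z /\ ((gs n z)%:E <= F z)%E).
  move=> n; rewrite /gs; case: (unpickle n) => [t|].
    by have [? [? _]] := hhf t.
  by split; [exact: (L0 VL)| move=> z; split].
pose A := fix A n := if n is n'.+1 then (fun z => Num.max (A n' z) (gs n'.+1 z)) else gs 0%N.
have AP : forall n, L (A n) /\ (forall z, 0 <= A n z /\ ((A n z)%:E <= F z)%E) /\
    (forall z, gs n z <= A n z).
  elim => [|n [LA [hA gA]]] /=; first by have [? ?] := gsP 0%N; split => //; split.
  have [Lg hg] := gsP n.+1.
  split; first exact: (Lmax VL).
  split => [z|z]; last by rewrite le_max lexx orbT.
  have [A0 AF] := hA z; have [g0 gF] := hg z.
  split; first by rewrite le_max A0.
  by rewrite /Num.max; case: ifP.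
have Amono : forall n z, A n z <= A n.+1 z by move=> n z /=; rewrite le_max lexx.
exists A; split.
- by move=> n; case: (AP n).
- by move=> n; case: (AP n) => _ [].
- exact: Amono.
move=> z b bF.
case: (ltP b 0) => b0.
  exists 0%N; apply: lt_le_trans b0 _; by case: (AP 0%N) => _ [/(_ z) []].
have [b' [bb' b'F]] : exists b' : R, b < b' /\ (b'%:E < F z)%E.
  move: bF (F0 z); case: (F z) => [r| |] //.
    rewrite lte_fin => br _; exists ((b + r) / 2); split; last rewrite lte_fin; lra.
  by move=> _ _; exists (b + 1); split; [lra | apply: ltry].
pose j := Num.truncn (2 / (b' - b)).
pose m := Num.truncn (b' * j.+1%:R).
pose a : R := m%:R / j.+1%:R.
have j0 : (0 : R) < j.+1%:R by rewrite ltr0Sn.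
have b'0 : 0 <= b' by lra.
have hj : 2 / (b' - b) < j.+1%:R by apply: truncnS_gt.
have hj' : j.+1%:R^-1 + j.+1%:R^-1 < b' - b.
  have h := hj; rewrite ltr_pdivrMr ?subr_gt0 // in h.
  have xy : j.+1%:R^-1 * j.+1%:R = 1 :> R by rewrite mulVf ?lt0r_neq0.
  have x0 : (0:R) < j.+1%:R^-1 by rewrite invr_gt0.
  move: xy x0 h; set x := j.+1%:R^-1; set y := j.+1%:R; set dd := b' - b => xy x0 h.
  have : x * (y * dd) = dd by rewrite mulrA xy mul1r.
  nra.
have ha1 : a <= b'.
  rewrite /a ler_pdivrMr //; by rewrite truncn_le mulr_ge0.
have ha2 : b' - j.+1%:R^-1 < a.
  have h := truncnS_gt (b' * j.+1%:R); rewrite -/m in h.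
  rewrite -[X in _ < X]natr1 in h.
  have e : m%:R / j.+1%:R + j.+1%:R^-1 = (m%:R + 1) / j.+1%:R :> R.
    by rewrite mulrDl mul1r.
  by rewrite /a ltrBlDr e ltr_pdivlMr.
have a0 : 0 <= a by rewrite /a divr_ge0.
have aF : (a%:E < F z)%E by apply: le_lt_trans b'F; rewrite lee_fin.
set t := (j, m, 0%N, 0%N).
have [wz [Lw hw]] := hbf (z, a); have wza := wz a0 aF.
have cw : continuous (bf (z, a)) by case: (HBC Lw).
have la : a - j.+1%:R^-1 < bf (z, a) z by rewrite wza ltrBlDr ltrDl invr_gt0.
have nV := @cvgr_gt _ _ _ (nbhs_filter z) _ _ (cw z) _ la.
have [eps eps0 ballV] := (dN z _).1 nV.
pose k := Num.truncn (2 / eps).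
have k0 : (0 : R) < k.+1%:R by rewrite ltr0Sn.
have hk : 2 * k.+1%:R^-1 < eps.
  have : 2 / eps < k.+1%:R by apply: truncnS_gt.
  rewrite ltr_pdivrMr // => h.
  by rewrite ltr_pdivrMr // mulrC.
have nB : nbhs z [set y | d z y < k.+1%:R^-1].
  by apply/(dN z _).2; exists (k.+1%:R^-1) => //; rewrite invr_gt0.
have zcl : closure D z by rewrite clD.
have [q [Dq dzq]] := zcl _ nB.
pose t' := (j, m, fD q, k).
have Bz : Bt t' z by exists q; split => //; split => //; rewrite dS.
have BV : Bt t' `<=` V t' z.
  move=> y [q' [Dq' [fq dq'y]]].
  have qq : q' = q by apply: injD; rewrite ?inE.
  rewrite qq in dq'y.
  apply: ballV => /=.
  apply: le_lt_trans (dT z q y) _.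
  apply: lt_trans hk; rewrite mulr_natl mulr2n; apply: ltrD => //.
have hlv : lv t' = a by [].
have hdl : dl t' = j.+1%:R^-1 by [].
have [_ [_ hcov]] := hhf t'.
have aF' : ((lv t')%:E < F z)%E by rewrite hlv.
have := hcov (ex_intro _ z (conj aF' BV)) z Bz.
rewrite hlv hdl => hz.
exists (pickle t').
have gsE : gs (pickle t') = hf t' by rewrite /gs pickleK.
have [_ [_ gA]] := AP (pickle t').
apply: lt_le_trans (gA z); rewrite gsE.
have h1' : (j.+1%:R^-1 : R) + (j.+1%:R^-1 : R) < b' - b := hj'.
apply: lt_trans hz; move: h1' (ha2); generalize (j.+1%:R^-1 : R) => x h1 h2; lra.
Qed.
End Approx.
Lemma esplit (R : realType) (p : R) (u v : \bar R) : (0 <= u)%E -> (0 <= v)%E ->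
  (p%:E < u + v)%E -> exists a1 a2 : R, [/\ (a1%:E < u)%E, (a2%:E < v)%E & p < a1 + a2].
Proof.
case: u => [r1| |] //; case: v => [r2| |] //.
- rewrite !lee_fin -EFinD lte_fin => r10 r20 pr.
  exists (r1 - (r1 + r2 - p) / 3), (r2 - (r1 + r2 - p) / 3).
  split; rewrite ?lte_fin; [lra|lra|clear r10 r20; lra].
- move=> r10 _ _; exists (r1 - 1), (p - r1 + 2); split; rewrite ?lte_fin ?ltry //; lra.
- move=> _ r20 _; exists (p - r2 + 2), (r2 - 1); split; rewrite ?lte_fin ?ltry //; lra.
- move=> _ _ _; exists (p + 2), 0; split; rewrite ?ltry //; lra.
Qed.

Section Dan.
Variables (R : realType) (T : topologicalType) (L : set (T -> R)).
Variable rho1 : (T -> R) -> R.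
Hypothesis VL : vector_lattice L.
Hypothesis HCL : contains_constants L.
Hypothesis SL : sublinear_risk_measure L rho1.
Hypothesis RG : regular L rho1.
Hypothesis GT : generates_topology L.
Hypothesis HBC : forall f, L f -> bounded_continuous f.
Hypothesis MET : metrizable R T.
Hypothesis SEP : separable T.
Let c := fun X : T -> R => rho1 (fun x => - `|X x|).
Let C := cap_ext L c.

Lemma lscD (F G : T -> \bar R) : lsc F -> lsc G -> (forall x, 0 <= F x)%E ->
  (forall x, 0 <= G x)%E -> lsc (fun x => F x + G x)%E.
Proof.
move=> lF lG F0 G0 x a ha.
have [a1 [a2 [h1 h2 h3]]] := esplit (F0 x) (G0 x) ha.
near=> y.
have : (a1%:E < F y)%E by near: y; exact: lF.
have : (a2%:E < G y)%E by near: y; exact: lG.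
move=> g2 g1; apply: lt_trans (lteD g1 g2); by rewrite -EFinD lte_fin.
Unshelve. all: by end_near.
Qed.

Lemma mono_nat (u : nat -> R) : (forall n, u n <= u n.+1) -> forall n m, (n <= m)%N -> u n <= u m.
Proof.
move=> hu n m nm.
exact: (@homo_leq R u (fun a b => a <= b) (@lexx _ _) (fun y a b h1 h2 => le_trans h1 h2) hu n m nm).
Qed.

Lemma daniell (F G : T -> \bar R) : lsc F -> lsc G -> (forall x, 0 <= F x)%E ->
  (forall x, 0 <= G x)%E ->
  (cap_lsc L c (fun x => F x + G x)%E <= cap_lsc L c F + cap_lsc L c G)%E.
Proof.
move=> lF lG F0 G0.
apply: ge_ereal_sup => _ [phi [Lp hp] <-].
have [A [LA hA Amon Acov]] := approx VL HCL GT HBC MET SEP lF F0.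
have [B [LB' hB Bmon Bcov]] := approx VL HCL GT HBC MET SEP lG G0.
pose psi n := fun x => Num.min (phi x) (A n x + B n x).
pose X n := fun x => phi x - psi n x.
have Lpsi : forall n, L (psi n) by move=> n; apply: (Lmin VL) => //; apply: (LD VL).
have LX : forall n, L (X n) by move=> n; apply: (LB VL).
have psi0 : forall n x, 0 <= psi n x.
  move=> n x; rewrite le_min; case: (hp x) => -> _ /=.
  by case: (hA n x) => a0 _; case: (hB n x) => b0 _; rewrite addr_ge0.
have dX : decr_to0 X.
  split.
    move=> n x; rewrite /X lerD2l lerN2 /psi le_min ge_min lexx /=.
    by rewrite ge_min lerD ?orbT.
  move=> x; apply/cvgrPdist_lt => e e0.
  have [p0 pFG] := hp x.
  have hlt : ((phi x - e)%:E < F x + G x)%E.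
    by apply: lt_le_trans pFG; rewrite lte_fin; lra.
  have [a1 [a2 [h1 h2 h3]]] := esplit (F0 x) (G0 x) hlt.
  have [n1 hn1] := Acov x a1 h1.
  have [n2 hn2] := Bcov x a2 h2.
  exists (maxn n1 n2) => // n /= hn.
  have An : A n1 x <= A n x.
    apply: (mono_nat (fun k => Amon k x)); exact: leq_trans (leq_maxl _ _) hn.
  have Bn : B n2 x <= B n x.
    apply: (mono_nat (fun k => Bmon k x)); exact: leq_trans (leq_maxr _ _) hn.
  rewrite sub0r normrN /X ger0_norm; last by rewrite subr_ge0 /psi ge_min lexx.
  have : phi x - e < psi n x.
    by rewrite /psi lt_min; apply/andP; split; lra.
  lra.
apply/lee_addgt0Pr => e e0.
have [N hN] := (cap_i VL SL RG).2.2.2 X LX dX e e0.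
have ephi : phi = (fun x => psi N x + X N x).
  by apply/funext => x; rewrite /X addrC subrK.
have h1 : c phi <= c (psi N) + c (X N).
  by rewrite {1}ephi; apply: (c_sub VL SL).
have h2 : c (psi N) <= c (A N) + c (B N).
  apply: le_trans (c_sub VL SL (LA N) (LB' N)).
  apply: (c_mono VL SL) => //; first by apply: (LD VL).
  move=> x; rewrite !ger0_norm ?psi0 //; first by rewrite /psi ge_min lexx orbT.
  by case: (hA N x) => a0 _; case: (hB N x) => b0 _; rewrite addr_ge0.
have hAN : ((c (A N))%:E <= cap_lsc L c F)%E by apply: cap_lsc_ub.
have hBN : ((c (B N))%:E <= cap_lsc L c G)%E by apply: cap_lsc_ub.
apply: le_trans (_ : ((c (A N))%:E + (c (B N))%:E + e%:E <= _)%E); last first.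
  by apply: leeD => //; apply: leeD.
have hN' : c (X N) < e := hN.
have hf : c phi <= c (A N) + c (B N) + e by lra.
by rewrite -!EFinD lee_fin.
Qed.

Lemma Ctri u v a b : (C u < a%:E)%E -> (C v < b%:E)%E -> (C (fun x => (u x + v x)%R) < ((a + b)%R)%:E)%E.
Proof.
move=> /C_lt [F [lF hF cF]] /C_lt [G [lG hG cG]].
have F0 : forall x, (0 <= F x)%E by move=> x; case: (hF x).
have G0 : forall x, (0 <= G x)%E by move=> x; case: (hG x).
have hFG : forall x, (0 <= (F x + G x))%E /\ ((`|u x + v x|)%:E <= F x + G x)%E.
  move=> x; split; first by apply: adde_ge0.
  have [_ ux] := hF x; have [_ vx] := hG x.
  apply: le_trans (leeD ux vx); rewrite -EFinD lee_fin; exact: ler_normD.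
apply: le_lt_trans (C_le_lsc L rho1 (lscD lF lG F0 G0) hFG) _.
apply: le_lt_trans (daniell lF lG F0 G0) _.
by rewrite EFinD; apply: lteD.
Qed.
End Dan.
Lemma le_eps3 (R : realType) (a b : R) : (forall d, 0 < d -> a <= b + (d + d + d)) -> a <= b.
Proof.
move=> H; apply/ler_addgt0Pr => e e0.
have e3 : 0 < e / 3 by rewrite divr_gt0.
have := H _ e3.
have -> : e / 3 + e / 3 + e / 3 = e by field.
by [].
Qed.

Lemma eq_eps (R : realType) (a b : R) : (forall d, 0 < d -> `|a - b| <= d + d) -> a = b.
Proof.
move=> H; apply/eqP; rewrite -subr_eq0 -normr_le0; apply/ler_addgt0Pr => e e0.
have e2 : 0 < e / 2 by rewrite divr_gt0.
have := H _ e2; rewrite add0r -splitr; by [].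
Qed.
Definition ext (R : realType) (T : topologicalType) (L : set (T -> R))
  (c : (T -> R) -> R) (r : (T -> R) -> R) (g : T -> R) : R :=
  sup [set y | exists f e, [/\ L f, (cap_ext L c (fun x => (g x - f x)%R) < e%:E)%E & y = r f - e]].

Section Ext.
Variables (R : realType) (T : topologicalType) (L : set (T -> R)).
Variable rho1 : (T -> R) -> R.
Hypothesis VL : vector_lattice L.
Hypothesis HCL : contains_constants L.
Hypothesis SL : sublinear_risk_measure L rho1.
Hypothesis RG : regular L rho1.
Hypothesis GT : generates_topology L.
Hypothesis HBC : forall f, L f -> bounded_continuous f.
Hypothesis MET : metrizable R T.
Hypothesis SEP : separable T.
Let c := fun X : T -> R => rho1 (fun x => - `|X x|).
Let C := cap_ext L c.

Lemma Ctri' u v a b : (C u < a%:E)%E -> (C v < b%:E)%E -> (C (fun x => (u x + v x)%R) < ((a + b)%R)%:E)%E.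
Proof. exact: (Ctri VL HCL SL RG GT HBC MET SEP). Qed.

Lemma C_sym g h : C (fun x => g x - h x) = C (fun x => h x - g x).
Proof. by apply: (C_abs_eq L rho1) => x; rewrite distrC. Qed.

Lemma C_ext g h : (forall x, g x = h x) -> C g = C h.
Proof. by move=> e; apply: (C_abs_eq L rho1) => x; rewrite e. Qed.

Lemma C_negE g : C (fun x => (- g x)%R) = C g.
Proof. by apply: (C_abs_eq L rho1) => x; rewrite normrN. Qed.

Lemma C_fin g : (C g < +oo)%E -> exists a, (C g < a%:E)%E.
Proof.
have := C_ge0 VL SL g; rewrite -/C.
case: (C g) => [r| |] // _ _; exists (r + 1); rewrite lte_fin; lra.
Qed.

Lemma C_nat u a n : (C u < a%:E)%E -> (C (fun x => (n.+1%:R * u x)%R) < ((n.+1%:R * a)%R)%:E)%E.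
Proof.
move=> hu; elim: n => [|n IH].
  by rewrite mul1r (C_ext (h := u)) // => x; rewrite mul1r.
rewrite (C_ext (h := fun x => (n.+1%:R * u x + u x)%R)); last first.
  by move=> x; rewrite -[n.+2%:R]natr1 mulrDl mul1r.
have -> : (n.+2%:R * a) = n.+1%:R * a + a by rewrite -[n.+2%:R]natr1 mulrDl mul1r.
exact: Ctri'.
Qed.

Lemma C_scale u a l : (C u < a%:E)%E ->
  (C (fun x => (l * u x)%R) < (((Num.truncn `|l|).+1%:R * a)%R)%:E)%E.
Proof.
move=> hu; apply: le_lt_trans (C_nat _ hu).
apply: (C_abs_le L rho1) => x; rewrite !normrM ler_wpM2r //.
rewrite [X in _ <= X]ger0_norm //; exact: ltW (truncnS_gt _).
Qed.

Lemma C_small u a l : `|l| <= 1 -> (C u < a%:E)%E -> (C (fun x => (l * u x)%R) < a%:E)%E.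
Proof.
move=> l1 hu; apply: le_lt_trans hu; apply: (C_abs_le L rho1) => x.
by rewrite normrM ler_piMl.
Qed.

Lemma C0' : C (fun _ => 0) = 0%E.
Proof. by apply: C0. Qed.

Lemma L1_L f : L f -> L1 L c f.
Proof.
move=> Lf; split; first by rewrite (C_L VL SL HBC Lf) ltry.
move=> e e0; exists f => //; rewrite -/C (C_ext (h := fun _ => 0)) ?C0' ?lte_fin //.
by move=> x; rewrite subrr.
Qed.

Lemma L1_add g h : L1 L c g -> L1 L c h -> L1 L c (fun x => g x + h x).
Proof.
move=> [gf ga] [hf ha]; split.
  have [a1 h1] := C_fin gf; have [a2 h2] := C_fin hf.
  by apply: lt_trans (Ctri' h1 h2) _; apply: ltry.
move=> e e0.
have e2 : 0 < e / 2 by rewrite divr_gt0.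
have [f1 Lf1 h1] := ga _ e2; have [f2 Lf2 h2] := ha _ e2.
exists (fun x => f1 x + f2 x); first exact: (LD VL).
rewrite -/C (C_ext (h := fun x => ((g x - f1 x) + (h x - f2 x))%R)).
  by rewrite (splitr e); apply: Ctri'.
by move=> x; lra.
Qed.

Lemma L1_scale l g : L1 L c g -> L1 L c (fun x => l * g x).
Proof.
move=> [gf ga]; split.
  have [a h] := C_fin gf.
  by apply: lt_trans (C_scale l h) _; apply: ltry.
move=> e e0.
set N : R := (Num.truncn `|l|).+1%:R.
have N0 : 0 < N by rewrite ltr0Sn.
have [f Lf h] := ga (e / N) (divr_gt0 e0 N0).
exists (fun x => l * f x); first exact: (LZ VL).
rewrite -/C (C_ext (h := fun x => (l * (g x - f x))%R)); last by move=> x; rewrite mulrBr.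
have := C_scale l h; rewrite -/N mulrC mulfVK //; exact: lt0r_neq0.
Qed.

Lemma L1_sub g h : L1 L c g -> L1 L c h -> L1 L c (fun x => g x - h x).
Proof.
move=> Lg Lh; have := L1_add Lg (L1_scale (-1) Lh).
by have -> : (fun x => g x + -1 * h x) = (fun x => g x - h x) by apply/funext => x; rewrite mulN1r.
Qed.

Variable r : (T -> R) -> R.
Hypothesis LIP : forall X Y, L X -> L Y -> r X <= r Y + c (fun x => X x - Y x).
Let E := ext L c r.

Lemma extP g f e : L f -> (C (fun x => (g x - f x)%R) < e%:E)%E ->
  r f - e <= E g /\ E g <= r f + e.
Proof.
move=> Lf hf.
set S := [set y | exists f e, [/\ L f, (cap_ext L c (fun x => (g x - f x)%R) < e%:E)%E & y = r f - e]].
have ub : ubound S (r f + e).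
  move=> y [f' [e' [Lf' h' ->]]].
  have hc : (C (fun x => (f' x - f x)%R) < ((e + e')%R)%:E)%E.
    rewrite (C_ext (h := fun x => ((g x - f x) + (- (g x - f' x)))%R)); last by move=> x; lra.
    apply: Ctri' => //.
    by rewrite C_negE.
  rewrite /C (C_L VL SL HBC (LB VL Lf' Lf)) lte_fin in hc.
  have hc' : c (fun x => f' x - f x) < e + e' := hc.
  have := LIP Lf' Lf; lra.
have Sne : S (r f - e) by exists f, e.
split; last by apply: ge_sup => //; exists (r f - e).
apply: sup_upper_bound => //; split; first by exists (r f - e).
by exists (r f + e).
Qed.

Lemma extL f : L f -> E f = r f.
Proof.
move=> Lf.
have h : forall e, 0 < e -> r f - e <= E f /\ E f <= r f + e.
  move=> e e0; apply: extP => //.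
  rewrite (C_ext (h := fun _ => 0)); last by move=> x; rewrite subrr.
  by rewrite C0' // lte_fin.
apply/le_anti/andP; split; apply/ler_addgt0Pr => e e0; have [h1 h2] := h e e0 => //.
lra.
Qed.

Lemma ext_lip g h e : L1 L c g -> (C (fun x => (h x - g x)%R) < e%:E)%E ->
  `|E h - E g| <= e.
Proof.
move=> [_ ga] hh.
rewrite ler_norml; apply/andP; split; last first.
  apply/ler_addgt0Pr => d d0.
  have d2 : 0 < d / 2 by rewrite divr_gt0.
  have [f Lf hf] := ga _ d2.
  have hf' : (C (fun x => (h x - f x)%R) < ((e + d / 2)%R)%:E)%E.
    rewrite (C_ext (h := fun x => ((h x - g x) + (g x - f x))%R)); last by move=> x; lra.
    exact: Ctri'.
  have [_ h1] := extP Lf hf'; have [h2 _] := extP Lf hf.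
  have : d / 2 + d / 2 = d by rewrite -splitr.
  lra.
rewrite lerNl; apply/ler_addgt0Pr => d d0.
have d2 : 0 < d / 2 by rewrite divr_gt0.
have [f Lf hf] := ga _ d2.
have hf' : (C (fun x => (h x - f x)%R) < ((e + d / 2)%R)%:E)%E.
  rewrite (C_ext (h := fun x => ((h x - g x) + (g x - f x))%R)); last by move=> x; lra.
  exact: Ctri'.
have [h1 _] := extP Lf hf'; have [_ h2] := extP Lf hf.
have : d / 2 + d / 2 = d by rewrite -splitr.
lra.
Qed.
Hypothesis CR : convex_risk_measure L r.

Lemma r_mono X Y : L X -> L Y -> (forall x, X x <= Y x) -> r Y <= r X.
Proof. by case: CR => + _; apply. Qed.
Lemma r_cvx X Y l : L X -> L Y -> 0 <= l <= 1 ->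
  r (fun x => l * X x + (1 - l) * Y x) <= l * r X + (1 - l) * r Y.
Proof. by case: CR => _ [+ _]; apply. Qed.
Lemma r_tr X a : L X -> r (fun x => X x + a) = r X - a.
Proof. by case: CR => _ [_ +]; apply. Qed.

Lemma ext_lip' g h e : L1 L c g -> (C (fun x => (h x - g x)%R) < e%:E)%E ->
  E h <= E g + e /\ E g <= E h + e.
Proof. move=> Lg hh; have := ext_lip Lg hh; rewrite ler_norml; move/andP => [? ?]; split; lra. Qed.

Lemma approxL1 g d : L1 L c g -> 0 < d -> exists f, [/\ L f,
  (C (fun x => (g x - f x)%R) < d%:E)%E & E g <= r f + d /\ r f <= E g + d].
Proof.
move=> Lg d0; have [_ ga] := Lg; have [f Lf hf] := ga _ d0.
exists f; split => //.
have := ext_lip' (L1_L Lf) hf; rewrite (extL Lf) => -[? ?]; split; lra.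
Qed.

Lemma ext_map : L1_map L c E.
Proof.
move=> g h Lg Lh eq; apply: eq_eps => d d0.
have : (C (fun x => (g x - h x)%R) < d%:E)%E by rewrite /C eq lte_fin.
move/(ext_lip Lh) => H; apply: le_trans H _; lra.
Qed.

Lemma ext_cont : L1_continuous L c E.
Proof.
move=> g Lg e e0; exists (e / 2); first by rewrite divr_gt0.
move=> h Lh hh; apply: le_lt_trans (ext_lip Lg hh) _.
by rewrite ltr_pdivrMr // ltr_pMr // ltr1n.
Qed.

Lemma ext_unique (psi : (T -> R) -> R) : L1_continuous L c psi ->
  (forall X, L X -> psi X = r X) -> forall X, L1 L c X -> psi X = E X.
Proof.
move=> cp pr X LX; apply: eq_eps => e e0.
have [d d0 hd] := cp X LX e e0.
have m0 : 0 < Num.min d e by rewrite lt_min d0 e0.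
have [f [Lf hf [h1 h2]]] := approxL1 LX m0.
have hf1 : (C (fun x => (f x - X x)%R) < d%:E)%E.
  by rewrite C_sym; apply: lt_le_trans hf _; rewrite lee_fin ge_min lexx.
have := hd f (L1_L Lf) hf1; rewrite pr // => h3.
have hf2 : (C (fun x => (X x - f x)%R) < e%:E)%E.
  by apply: lt_le_trans hf _; rewrite lee_fin ge_min lexx orbT.
have := ext_lip' (L1_L Lf) hf2; rewrite (extL Lf) => -[h4 h5].
rewrite ler_norml; apply/andP; split; move: h3; rewrite ltr_norml => /andP[? ?]; lra.
Qed.

Lemma ext_tr X a : L1 L c X -> E (fun x => X x + a) = E X - a.
Proof.
move=> LX; apply: eq_eps => d d0.
have [f [Lf hf [h1 h2]]] := approxL1 LX d0.
have Lfa : L (fun x => f x + a) by apply: (LD VL) => //; apply: (Lc HCL).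
have hfa : (C (fun x => ((X x + a) - (f x + a))%R) < d%:E)%E.
  by rewrite (C_ext (h := fun x => (X x - f x)%R)) // => x; lra.
have := ext_lip' (L1_L Lfa) hfa; rewrite (extL Lfa) r_tr // => -[h3 h4].
rewrite ler_norml; apply/andP; split; lra.
Qed.

Lemma ext_cvx X Y l : L1 L c X -> L1 L c Y -> 0 <= l <= 1 ->
  E (fun x => l * X x + (1 - l) * Y x) <= l * E X + (1 - l) * E Y.
Proof.
move=> LX LY /andP[l0 l1]; apply: le_eps3 => d d0.
have [f [Lf hf [h1 h2]]] := approxL1 LX d0.
have [k [Lk hk [h3 h4]]] := approxL1 LY d0.
have LW : L (fun x => l * f x + (1 - l) * k x) by apply: (LD VL); apply: (LZ VL).
have hW : (C (fun x => ((l * X x + (1 - l) * Y x) - (l * f x + (1 - l) * k x))%R)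
    < ((d + d)%R)%:E)%E.
  rewrite (C_ext (h := fun x => (l * (X x - f x) + (1 - l) * (Y x - k x))%R)); last first.
    by move=> x; rewrite !mulrBr; lra.
  apply: Ctri'; apply: C_small => //.
    by rewrite ger0_norm.
  rewrite ger0_norm; lra.
have [h5 _] := ext_lip' (L1_L LW) hW; rewrite (extL LW) in h5.
have h6 := r_cvx Lf Lk (introT andP (conj l0 l1)).
have h7 : l * r f <= l * (E X + d) by apply: ler_wpM2l.
have h8 : (1 - l) * r k <= (1 - l) * (E Y + d) by apply: ler_wpM2l; lra.
rewrite !mulrDr in h7 h8; nra.
Qed.

Lemma ext_mono X Y : L1 L c X -> L1 L c Y -> L1_le L c X Y -> E Y <= E X.
Proof.
move=> LX LY [fs [hfs conv]].
have LZ := L1_sub LY LX.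
have eqZ : L1_equiv L c (fun x => Y x - X x) (fun x => Y x - X x).
  rewrite /L1_equiv -/C (C_ext (h := fun _ => 0)) ?C0' // => x; lra.
apply: le_eps3 => d d0.
have [N HN] := conv _ LZ eqZ d d0.
have hN := HN N (leqnn N).
have [LfN fN0] := hfs N.
have [f [Lf hf [h1 h2]]] := approxL1 LX d0.
have Lg : L (fun x => f x + fs N x) by apply: (LD VL).
have hg : (C (fun x => ((X x + fs N x) - (f x + fs N x))%R) < d%:E)%E.
  by rewrite (C_ext (h := fun x => (X x - f x)%R)) // => x; lra.
have [h3 _] := ext_lip' (L1_L Lg) hg; rewrite (extL Lg) in h3.
have h4 : r (fun x => f x + fs N x) <= r f by apply: r_mono => // x; rewrite lerDl.
have LXN : L1 L c (fun x => X x + fs N x) by apply: L1_add => //; apply: L1_L.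
have hY : (C (fun x => (Y x - (X x + fs N x))%R) < d%:E)%E.
  by rewrite (C_ext (h := fun x => ((Y x - X x) - fs N x)%R)) // => x; lra.
have [h5 _] := ext_lip' LXN hY.
lra.
Qed.

End Ext.
Section Final.
Variables (R : realType) (T : topologicalType) (L : set (T -> R)).
Variable rho1 : (T -> R) -> R.
Hypothesis VL : vector_lattice L.
Hypothesis HCL : contains_constants L.
Hypothesis SL : sublinear_risk_measure L rho1.
Hypothesis RG : regular L rho1.
Hypothesis GT : generates_topology L.
Hypothesis HBC : forall f, L f -> bounded_continuous f.
Hypothesis MET : metrizable R T.
Hypothesis SEP : separable T.
Let c := fun X : T -> R => rho1 (fun x => - `|X x|).
Let C := cap_ext L c.

Lemma LIP1 : forall X Y, L X -> L Y -> rho1 X <= rho1 Y + c (fun x => X x - Y x).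
Proof. by apply: (cvx_lip VL SL) => //; case: SL. Qed.

Lemma ext_hom1 X l : L1 L c X -> 0 <= l -> ext L c rho1 (fun x => l * X x) = l * ext L c rho1 X.
Proof.
move=> LX l0; apply: eq_eps => d d0.
set N : R := (Num.truncn `|l|).+1%:R.
have N0 : 0 < N by rewrite ltr0Sn.
have lN : l <= N by rewrite -(ger0_norm l0); exact: ltW (truncnS_gt _).
have dN : 0 < d / N by rewrite divr_gt0.
have [f [Lf hf [h1 h2]]] := approxL1 VL HCL SL RG GT HBC MET SEP LIP1 LX dN.
have Llf : L (fun x => l * f x) by apply: (LZ VL).
have hl : (C (fun x => (l * X x - l * f x)%R) < d%:E)%E.
  rewrite /C /c (C_ext L rho1 (h := fun x => (l * (X x - f x))%R)); last by move=> x; rewrite mulrBr.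
  by have := C_scale VL HCL SL RG GT HBC MET SEP l hf; rewrite -/N mulrC mulfVK // lt0r_neq0.
have [h3 h4] := ext_lip' VL HCL SL RG GT HBC MET SEP LIP1 (L1_L VL HCL SL HBC Llf) hl.
rewrite (extL VL HCL SL RG GT HBC MET SEP LIP1 Llf) (rho1_hom SL Lf l0) in h3 h4.
have h5 : l * (d / N) <= d.
  have e : N * (d / N) = d by rewrite mulrC mulfVK // lt0r_neq0.
  by rewrite -[X in _ <= X]e; apply: ler_wpM2r => //; apply: ltW.
have h6 : l * rho1 f <= l * (ext L c rho1 X + d / N) by apply: ler_wpM2l.
have h7 : l * ext L c rho1 X <= l * (rho1 f + d / N) by apply: ler_wpM2l.
rewrite !mulrDr in h6 h7.
have h3' : ext L c rho1 (fun x => l * X x) <= l * rho1 f + d := h3.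
have h4' : l * rho1 f <= ext L c rho1 (fun x => l * X x) + d := h4.
move: h3' h4' h5 h6 h7; set P := l * rho1 f; set Q := l * ext L c rho1 X; set Z := l * (d / N).
set A := ext L c rho1 _ => h3' h4' h5 h6 h7.
rewrite ler_norml; apply/andP; split; lra.
Qed.

Lemma ext_le (r1 r2 : (T -> R) -> R) :
  (forall X Y, L X -> L Y -> r1 X <= r1 Y + c (fun x => X x - Y x)) ->
  (forall X Y, L X -> L Y -> r2 X <= r2 Y + c (fun x => X x - Y x)) ->
  (forall X, L X -> r1 X <= r2 X) ->
  forall X, L1 L c X -> ext L c r1 X <= ext L c r2 X.
Proof.
move=> L1r L2r le12 X [_ ga]; apply: le_eps3 => d d0.
have [f Lf hf] := ga _ d0.
have [_ h1] := extP VL HCL SL RG GT HBC MET SEP L1r Lf hf.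
have [h2 _] := extP VL HCL SL RG GT HBC MET SEP L2r Lf hf.
have h1' : ext L c r1 X <= r1 f + d := h1.
have h2' : r2 f - d <= ext L c r2 X := h2.
have := le12 _ Lf; lra.
Qed.
End Final.
Theorem lemma5p5 (R : realType) (T : topologicalType) (L : set (T -> R))
  (rho rho1 : (T -> R) -> R) :
  metrizable R T -> separable T ->
  (forall f, L f -> bounded_continuous f) ->
  vector_lattice L -> contains_constants L -> generates_topology L ->
  convex_risk_measure L rho -> normalized rho -> uniformly_regular L rho ->
  sublinear_risk_measure L rho1 -> regular L rho1 ->
  (forall X, L X -> rho X <= rho1 X) ->
  let c := fun X : T -> R => rho1 (fun x => - `|X x|) in
  (* (i) *)
  capacity L c /\
  (* (ii) *)
  exists rho1b : (T -> R) -> R,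
    L1_sublinear_risk_measure L c rho1b /\ L1_continuous L c rho1b /\
    (forall X, L X -> rho1b X = rho1 X) /\
    (forall psi : (T -> R) -> R, L1_continuous L c psi ->
       (forall X, L X -> psi X = rho1 X) ->
       forall X, L1 L c X -> psi X = rho1b X) /\
  (* (iii) *)
  exists rhob : (T -> R) -> R,
    L1_convex_risk_measure L c rhob /\ normalized rhob /\
    L1_continuous L c rhob /\
    (forall X, L X -> rhob X = rho X) /\
    (forall psi : (T -> R) -> R, L1_continuous L c psi ->
       (forall X, L X -> psi X = rho X) ->
       forall X, L1 L c X -> psi X = rhob X) /\
    (forall X, L1 L c X -> rhob X <= rho1b X).
Proof.
move=> MET SEP HBC VL HCL GT CR NR UR SL RG le1 c.
have LIPr := cvx_lip VL SL CR le1.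
have LIP1' := LIP1 VL SL.
have CR1 : convex_risk_measure L rho1 by case: SL.
split; first exact: (cap_i VL SL RG).
exists (ext L c rho1); split.
  split; last by move=> X l LX l0; apply: (ext_hom1 VL HCL SL RG GT HBC MET SEP).
  split; first exact: (ext_map VL HCL SL RG GT HBC MET SEP LIP1').
  split; first by move=> X Y LX LY; apply: (ext_mono VL HCL SL RG GT HBC MET SEP LIP1' CR1).
  split; first by move=> X Y l LX LY; apply: (ext_cvx VL HCL SL RG GT HBC MET SEP LIP1' CR1).
  by move=> X a LX; apply: (ext_tr VL HCL SL RG GT HBC MET SEP LIP1' CR1).
split; first exact: (ext_cont VL HCL SL RG GT HBC MET SEP LIP1').
split; first by move=> X LX; apply: (extL VL HCL SL RG GT HBC MET SEP LIP1').
split; first by move=> psi; apply: (ext_unique VL HCL SL RG GT HBC MET SEP LIP1').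
exists (ext L c rho); split.
  split; first exact: (ext_map VL HCL SL RG GT HBC MET SEP LIPr).
  split; first by move=> X Y LX LY; apply: (ext_mono VL HCL SL RG GT HBC MET SEP LIPr CR).
  split; first by move=> X Y l LX LY; apply: (ext_cvx VL HCL SL RG GT HBC MET SEP LIPr CR).
  by move=> X a LX; apply: (ext_tr VL HCL SL RG GT HBC MET SEP LIPr CR).
split.
  by rewrite /normalized (extL VL HCL SL RG GT HBC MET SEP LIPr (L0 VL)).
split; first exact: (ext_cont VL HCL SL RG GT HBC MET SEP LIPr).
split; first by move=> X LX; apply: (extL VL HCL SL RG GT HBC MET SEP LIPr).
split; first by move=> psi; apply: (ext_unique VL HCL SL RG GT HBC MET SEP LIPr).
by move=> X LX; apply: (ext_le VL HCL SL RG GT HBC MET SEP LIPr LIP1' le1).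
Qed.
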